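(* Let $4.999\le r\le 5$, $1\le\theta\le 2.2$, and $\delta\in\mathbb{R}$. Define $u_0=u_1=1$, $u_2=\theta+\delta$, and $u_n=(r-\theta)u_{n-1}-(r-2\theta)u_{n-2}-\theta u_{n-3}$ for $n\ge 3$. Let $q(x)=1-(r-\theta)x+(r-2\theta)x^2+\theta x^3$, and suppose the roots $\alpha,\beta,\gamma$ of $q$ are real with $\alpha<-1<0<\gamma<\beta<1$. If $\theta+\delta<\frac{1}{1-\gamma}$, then $u_{n+1}-u_n\to-\infty$ as $n\to\infty$. *)

(* Defs.v *)
From Stdlib Require Import Reals.
From Coquelicot Require Import Coquelicot.
Open Scope R_scope.

(* Triple (u_n, u_{n+1}, u_{n+2}) of the recurrence
   u_0 = u_1 = 1, u_2 = theta + delta,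
   u_n = (r - theta) u_{n-1} - (r - 2 theta) u_{n-2} - theta u_{n-3}. *)
Fixpoint u_triple (r theta delta : R) (n : nat) : R * R * R :=
  match n with
  | O => (1, 1, theta + delta)
  | S m =>
      let '(a, b, c) := u_triple r theta delta m in
      (b, c, (r - theta) * c - (r - 2 * theta) * b - theta * a)
  end.

Definition u_seq (r theta delta : R) (n : nat) : R :=
  fst (fst (u_triple r theta delta n)).

Definition q_poly (r theta x : R) : R :=
  1 - (r - theta) * x + (r - 2 * theta) * x ^ 2 + theta * x ^ 3.

(* Main.v *)
Require Import Defs.
From Stdlib Require Import Reals Lra.
From Coquelicot Require Import Coquelicot.
Open Scope R_scope.

Lemma ut_S r t d n : u_triple r t d (S n) =
  (snd (fst (u_triple r t d n)), snd (u_triple r t d n),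
   (r - t) * snd (u_triple r t d n) - (r - 2 * t) * snd (fst (u_triple r t d n))
   - t * fst (fst (u_triple r t d n))).
Proof. simpl. destruct (u_triple r t d n) as [[a b] c]. reflexivity. Qed.

Lemma us1 r t d n : u_seq r t d (S n) = snd (fst (u_triple r t d n)).
Proof. unfold u_seq; rewrite ut_S; reflexivity. Qed.

Lemma us2 r t d n : u_seq r t d (S (S n)) = snd (u_triple r t d n).
Proof. rewrite us1, ut_S; reflexivity. Qed.

Lemma us3 r t d n : u_seq r t d (S (S (S n))) =
  (r - t) * u_seq r t d (S (S n)) - (r - 2 * t) * u_seq r t d (S n) - t * u_seq r t d n.
Proof. rewrite us2, us2, us1, ut_S. reflexivity. Qed.

Lemma powrec (y c1 c2 c3 : R) n : y*y*y = c1*(y*y) - c2*y - c3 ->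
  y ^ (S (S (S n))) = c1 * y ^ (S (S n)) - c2 * y ^ (S n) - c3 * y ^ n.
Proof.
  intros Hy. simpl.
  replace (y * (y * (y * y ^ n))) with ((y*y*y) * y ^ n) by ring.
  rewrite Hy. ring.
Qed.

Lemma cubic_inv r th x : x <> 0 -> q_poly r th x = 0 ->
  /x*/x*/x = (r - th) * (/x*/x) - (r - 2*th) * /x - th.
Proof.
  intros Hx Hq.
  assert (E : /x*/x*/x - ((r - th) * (/x*/x) - (r - 2*th) * /x - th) = q_poly r th x / x^3)
    by (unfold q_poly; field; auto).
  rewrite Hq in E. unfold Rdiv in E. rewrite Rmult_0_l in E. lra.
Qed.

Theorem mainTheorem8 (r theta delta alpha beta gamma : R) :
  4.999 <= r <= 5 ->
  1 <= theta <= 2.2 ->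
  (forall x : R, q_poly r theta x = theta * (x - alpha) * (x - beta) * (x - gamma)) ->
  alpha < -1 -> 0 < gamma -> gamma < beta -> beta < 1 ->
  theta + delta < 1 / (1 - gamma) ->
  is_lim_seq (fun n => u_seq r theta delta (S n) - u_seq r theta delta n) m_infty.
Proof.
  intros Hr Ht H Ha Hg Hgb Hb Hs.
  set (s := theta + delta).
  set (d := fun n => u_seq r theta delta (S n) - u_seq r theta delta n).
  set (a := / alpha). set (b := / beta). set (g := / gamma).
  assert (Ha0 : alpha <> 0) by lra. assert (Hb0 : beta <> 0) by lra.
  assert (Hg0 : gamma <> 0) by lra.
  assert (Hqa : q_poly r theta alpha = 0) by (rewrite H; ring).
  assert (Hqb : q_poly r theta beta = 0) by (rewrite H; ring).
  assert (Hqg : q_poly r theta gamma = 0) by (rewrite H; ring).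
  pose proof (cubic_inv r theta alpha Ha0 Hqa) as Ca.
  pose proof (cubic_inv r theta beta Hb0 Hqb) as Cb.
  pose proof (cubic_inv r theta gamma Hg0 Hqg) as Cg.
  fold a in Ca. fold b in Cb. fold g in Cg.
  assert (Ha1 : -1 < a < 0).
  { unfold a. split.
    - apply (Rmult_lt_reg_l (- alpha)); [lra|].
      assert (alpha * / alpha = 1) by (field; lra). nra.
    - apply Rinv_lt_0_compat; lra. }
  assert (Hbg : 1 < b < g).
  { unfold b, g. split.
    - rewrite <- Rinv_1. apply Rinv_lt_contravar; lra.
    - apply Rinv_lt_contravar; nra. }
  assert (V : a + b + g = r - theta).
  { pose proof (H 0) as H0. pose proof (H 1) as H1. pose proof (H (-1)) as Hm1.
    unfold q_poly in H0, H1, Hm1.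
    assert (V3 : theta * (alpha*beta*gamma) = -1) by lra.
    assert (V2 : theta * (alpha*beta + beta*gamma + gamma*alpha) = -(r - theta)) by lra.
    assert (E : a + b + g = (alpha*beta + beta*gamma + gamma*alpha) / (alpha*beta*gamma))
      by (unfold a, b, g; field; auto).
    rewrite E.
    assert (He3 : alpha*beta*gamma <> 0) by (intro Z; rewrite Z in V3; lra).
    assert (Hth : theta <> 0) by lra.
    apply (Rmult_eq_reg_r (theta * (alpha*beta*gamma))); [| intro Z; lra].
    replace ((alpha*beta + beta*gamma + gamma*alpha) / (alpha*beta*gamma) * (theta * (alpha*beta*gamma)))
      with (theta * (alpha*beta + beta*gamma + gamma*alpha)) by (field; auto).
    rewrite V2, V3. ring. }
  assert (D0 : d 0%nat = 0) by (unfold d, u_seq; simpl; ring).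
  assert (D1 : d 1%nat = s - 1) by (unfold d, u_seq, s; simpl; ring).
  assert (D2 : d 2%nat = (r - theta - 1) * s - r + theta)
    by (unfold d, u_seq, s; simpl; ring).
  assert (Drec : forall n, d (S (S (S n))) = (r - theta) * d (S (S n)) - (r - 2*theta) * d (S n) - theta * d n).
  { intro n. unfold d. rewrite (us3 _ _ _ (S n)), (us3 _ _ _ n). ring. }
  set (e0 := d 0%nat). set (e1 := d 1%nat). set (e2 := d 2%nat).
  set (A := (e2 - (a+b)*e1 + a*b*e0) / ((g-a)*(g-b))).
  set (B := (e2 - (a+g)*e1 + a*g*e0) / ((b-a)*(b-g))).
  set (C := (e2 - (b+g)*e1 + b*g*e0) / ((a-b)*(a-g))).
  assert (Hga : g - a <> 0) by lra. assert (Hgb' : g - b <> 0) by lra.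
  assert (Hba : b - a <> 0) by lra.
  assert (Hab : a - b <> 0) by lra. assert (Hag : a - g <> 0) by lra.
  assert (Hbg' : b - g <> 0) by lra.
  assert (Closed : forall n, d n = A * g^n + B * b^n + C * a^n).
  { assert (K : forall n, d n = A * g^n + B * b^n + C * a^n /\
               d (S n) = A * g^(S n) + B * b^(S n) + C * a^(S n) /\
               d (S (S n)) = A * g^(S (S n)) + B * b^(S (S n)) + C * a^(S (S n))).
    { intro n. induction n as [|n IH].
      - fold e0 e1 e2. unfold A, B, C. simpl. repeat split; field; repeat split; auto.
      - destruct IH as [I0 [I1 I2]]. split; [exact I1|]. split; [exact I2|].
        rewrite Drec, I0, I1, I2.
        rewrite (powrec g _ _ _ n Cg), (powrec b _ _ _ n Cb), (powrec a _ _ _ n Ca).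
        ring. }
    intro n; apply K. }
  assert (HA : A < 0).
  { unfold A. unfold Rdiv. apply Rmult_neg_pos.
    2:{ apply Rinv_0_lt_compat. nra. }
    unfold e0, e1, e2. rewrite D0, D1, D2.
    replace (a + b) with (r - theta - g) by lra.
    replace ((r - theta - 1) * s - r + theta - (r - theta - g) * (s - 1) + a * b * 0)
      with ((s * (1 - gamma) - 1) / gamma) by (unfold g; field; auto).
    unfold Rdiv. apply Rmult_neg_pos; [| apply Rinv_0_lt_compat; lra].
    assert (s * (1 - gamma) < 1 / (1 - gamma) * (1 - gamma)).
    { apply Rmult_lt_compat_r; [lra| exact Hs]. }
    replace (1 / (1 - gamma) * (1 - gamma)) with 1 in H0 by (field; lra).
    lra. }
  assert (Hg0' : 0 < g) by lra.
  apply is_lim_seq_ext with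
    (u := fun n => g ^ n * (A + B * (b / g) ^ n + C * (a / g) ^ n)).
  { intro n. fold (d n). rewrite Closed.
    unfold Rdiv. rewrite !Rpow_mult_distr, !pow_inv.
    field. apply pow_nonzero. lra. }
  apply is_lim_seq_mult with (l1 := p_infty) (l2 := Finite A).
  - apply is_lim_seq_geom_p. lra.
  - replace (Finite A) with (Finite (A + B * 0 + C * 0)) by (f_equal; ring).
    apply is_lim_seq_plus'.
    + apply is_lim_seq_plus'. apply is_lim_seq_const.
      change (is_lim_seq (fun n => B * (b / g) ^ n) (Rbar_mult B 0)). apply is_lim_seq_scal_l. apply is_lim_seq_geom.
      rewrite Rabs_right. apply (Rmult_lt_reg_r g); [lra|].
      unfold Rdiv. rewrite Rmult_assoc, Rinv_l by lra. lra.
      apply Rle_ge. unfold Rdiv. apply Rmult_le_pos; [lra|]. left; apply Rinv_0_lt_compat; lra.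
    + change (is_lim_seq (fun n => C * (a / g) ^ n) (Rbar_mult C 0)). apply is_lim_seq_scal_l. apply is_lim_seq_geom.
      rewrite Rabs_left. apply (Rmult_lt_reg_r g); [lra|].
      unfold Rdiv. rewrite Ropp_mult_distr_l, Rmult_assoc, Rinv_l by lra. lra.
      unfold Rdiv. apply Rmult_neg_pos; [lra|]. apply Rinv_0_lt_compat; lra.
  - apply is_Rbar_mult_p_infty_neg. simpl. exact HA.
Qed.
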